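(* Let $\{z_n\}_{n\ge 0}$ be a sequence of positive numbers satisfying the recurrence $$z_{n+1}=a_nz_{n}+b_nz_{n-1}\qquad (n\ge 1),$$ where $\{a_n\}$ and $\{b_n\}$ are real sequences. Assume that for all $n\geq 1$ we have $b_{n+1}\geq b_n>0$, $a_{n+1}\geq a_n>0$ and $$21a_n^2+11 a_{n+1}a_n-4b_{n-1}\geq0.$$ For each $n$ let $$f_n(x)=\left[(a_{n+1}a_n+b_{n+1})x+a_{n+1}b_n\right](x-a_{n-1})x^6-b_{n-1}(a_nx+b_n)^4.$$ If there exist a positive integer $N$ and a sequence $\{\lambda_n\}$ such that for all $n\geq N+1$, $$\frac{z_{n}}{z_{n-1}}\geq \lambda_n\geq a_n,\quad f_n''(\lambda_n)>0,\quad f_n'(\lambda_n)>0,\quad f_n(\lambda_n)>0,$$ then the ratio sequence $\{z_{n+1}/z_n\}_{n\ge N}$ is ratio log-convex.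
   Context: A sequence $\{x_n\}$ of positive numbers is log-convex if $x_{n-1}x_{n+1}\ge x_n^2$ for all indices $n$ for which the three terms are defined (i.e. all but the first index), and log-concave if $x_{n-1}x_{n+1}\le x_n^2$ for all such $n$. A sequence $\{x_n\}$ of positive numbers is called ratio log-convex (resp. ratio log-concave) if the sequence $\{x_{n+1}/x_n\}$ is log-convex (resp. log-concave). *)

(* Defs.v *)
From mathcomp Require Import all_boot all_order all_algebra.
Set Implicit Arguments. Unset Strict Implicit. Unset Printing Implicit Defensive.
Import Order.TTheory GRing.Theory Num.Theory.
Local Open Scope ring_scope.

Definition log_convex_from (R : realFieldType) (N : nat) (x : nat -> R) : Prop :=
  forall n : nat, (N < n)%N -> x n.-1 * x n.+1 >= x n ^+ 2.

Definition ratio_seq (R : realFieldType) (x : nat -> R) : nat -> R :=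
  fun n => x n.+1 / x n.

Definition ratio_log_convex_from (R : realFieldType) (N : nat) (x : nat -> R) : Prop :=
  log_convex_from N (ratio_seq x).

Definition fpoly (R : realFieldType) (a b : nat -> R) (n : nat) : {poly R} :=
  ((a n.+1 * a n + b n.+1) *: 'X + (a n.+1 * b n)%:P) * ('X - (a n.-1)%:P) * 'X^6
  - (b n.-1)%:P * ((a n) *: 'X + (b n)%:P) ^+ 4.

(* Main.v *)
Require Import Defs.
From mathcomp Require Import all_boot all_order all_algebra ring lra.
Import Order.TTheory GRing.Theory Num.Theory.
Local Open Scope ring_scope.
Lemma powle (R : realFieldType) (p l : R) k : 0 <= p -> p <= l -> p ^+ k <= l ^+ k.
Proof. move=> p0 pl; elim: k => [|k IH]; first by rewrite !expr0.
rewrite !exprS; apply: ler_pM => //; exact: exprn_ge0. Qed.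

Lemma coefs (R : realFieldType) (a1 b1 c d p q l : R) :
  0 < p -> p <= a1 -> c <= p -> 0 < d -> d <= q -> q <= b1 ->
  4 * d <= 21 * p ^+ 2 + 11 * a1 * p -> p <= l ->
  let A := a1 * p + b1 in let B := a1 * q in
  let al := A * l + B in let be := l - c in
  [/\ 0 <= 20 * al * be * l ^+ 3 + 15 * (al + A * be) * l ^+ 4 + 6 * A * l ^+ 5
              - 4 * d * p ^+ 3 * (p * l + q),
      0 <= 15 * al * be * l ^+ 2 + 20 * (al + A * be) * l ^+ 3 + 15 * A * l ^+ 4
              - d * p ^+ 4,
      0 <= 6 * al * be * l + 15 * (al + A * be) * l ^+ 2 + 20 * A * l ^+ 3,
      0 <= al * be + 6 * (al + A * be) * l + 15 * A * l ^+ 2 &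
      0 <= (al + A * be) + 6 * A * l /\ 0 <= A].
Proof.
move=> p0 pa1 cp d0 dq qb1 hd pl A B al be.
have l0 : 0 < l by apply: lt_le_trans pl.
have l0w : 0 <= l by lra.
have a10 : 0 < a1 by apply: lt_le_trans pa1.
have q0 : 0 < q by apply: lt_le_trans dq.
have b10 : 0 < b1 by apply: lt_le_trans qb1.
have A0 : 0 <= A by rewrite /A; apply: addr_ge0; [apply: mulr_ge0|]; lra.
have B0 : 0 <= B by rewrite /B; apply: mulr_ge0; lra.
have be0 : 0 <= be by rewrite /be; lra.
have al0 : 0 <= al by rewrite /al; apply: addr_ge0 => //; apply: mulr_ge0; lra.
have Abe : 0 <= A * be by apply: mulr_ge0.
have alb : 0 <= al * be by apply: mulr_ge0.
have lk k : 0 <= l ^+ k by apply: exprn_ge0; lra.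
have pk k : p ^+ k <= l ^+ k by apply: powle; lra.
have pk0 k : 0 <= p ^+ k by apply: exprn_ge0; lra.
have T1 : 0 <= 20 * al * be * l ^+ 3 by rewrite -mulrA; apply: mulr_ge0; [lra|]; apply: mulr_ge0.
have T2 : 0 <= A * be * l ^+ 4 by apply: mulr_ge0.
have T3 : A * l ^+ 5 <= al * l ^+ 4.
  by rewrite exprSr mulrA mulrAC ler_wpM2r // /al lerDl.
have ml x y : 0 <= x -> 0 <= y -> 0 <= x * y := @mulr_ge0 _ x y.
have a1l : 0 <= a1 by lra.
have q0' : 0 <= q by lra.
have p0' : 0 <= p by lra.
have d0' : 0 <= d by lra.
have F1 : 4 * d * (p ^+ 3 * q) <= (21 * p ^+ 2 + 11 * a1 * p) * (p ^+ 3 * q).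
  by apply: ler_wpM2r => //; apply: mulr_ge0.
have F2 : p ^+ 5 * q <= l ^+ 5 * q by apply: ler_wpM2r.
have F3 : a1 * p ^+ 4 * q <= a1 * l ^+ 4 * q.
  by apply: ler_wpM2r => //; apply: ler_wpM2l.
have F5 : p ^+ 4 * l <= a1 * l ^+ 4.
  have -> : p ^+ 4 * l = p * (p ^+ 3 * l) by ring.
  have -> : a1 * l ^+ 4 = a1 * (l ^+ 3 * l) by ring.
  apply: ler_pM => //; first (apply: mulr_ge0 => //; lra). apply: ler_wpM2r => //; lra.
have F4 : d * (p ^+ 4 * l) <= q * (a1 * l ^+ 4).
  apply: ler_pM => //; apply: mulr_ge0 => //; lra.
have F6 : q * l ^+ 5 <= b1 * l ^+ 5 by apply: ler_wpM2r.
have F7 : 0 <= a1 * p * l ^+ 5 by apply: mulr_ge0 => //; apply: mulr_ge0.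
have G1 : 4 * d * p ^+ 4 <= (21 * p ^+ 2 + 11 * a1 * p) * p ^+ 4 by apply: ler_wpM2r.
have G2 : p * (p * p ^+ 4) <= a1 * (p * l ^+ 4).
  apply: (ler_pM p0' _ pa1); first exact: mulr_ge0. exact: ler_wpM2l.
have G3 : (a1 * p) * p ^+ 4 <= (a1 * p) * l ^+ 4 by apply: ler_wpM2l => //; apply: mulr_ge0.
have H1 : 0 <= al * be * l ^+ 2 by apply: mulr_ge0.
have H2 : 0 <= al * l ^+ 3 by apply: mulr_ge0.
have H3 : 0 <= A * be * l ^+ 3 by apply: mulr_ge0.
have H4 : 0 <= b1 * l ^+ 4 by apply: mulr_ge0 => //; lra.
have H5 : 0 <= A * l ^+ 4 by apply: mulr_ge0.
have H6 : 0 <= al * be * l by apply: mulr_ge0.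
have H7 : 0 <= al * l ^+ 2 by apply: mulr_ge0.
have H8 : 0 <= A * be * l ^+ 2 by apply: mulr_ge0.
have H9 : 0 <= A * l ^+ 3 by apply: mulr_ge0.
have H10 : 0 <= al * l by apply: mulr_ge0 => //; lra.
have H11 : 0 <= A * be * l by apply: mulr_ge0 => //; lra.
have H12 : 0 <= A * l ^+ 2 by apply: mulr_ge0.
have H13 : 0 <= A * l by apply: mulr_ge0 => //; lra.
have H14 : 0 <= al * l ^+ 4 by apply: mulr_ge0.
have H15 : 0 <= A * l ^+ 5 by apply: mulr_ge0.
move: alb Abe al0 A0 T1 T2 T3 H1 H2 H3 H5 H6 H7 H8 H9 H10 H11 H12 H13 H14 H15.
rewrite /al /be /A /B => alb Abe al0 A0 T1 T2 T3 H1 H2 H3 H5 H6 H7 H8 H9 H10 H11 H12 H13 H14 H15.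
split.
- lra.
- lra.
- lra.
- lra.
- split; lra.
Qed.

Lemma e0 (R : realFieldType) (a b : nat -> R) n x :
  (fpoly a b n).[x] = ((a n.+1  *  a n + b n.+1)  *  x + a n.+1  *  b n)  *  (x - a n.-1)  *  x ^+ 6
   - b n.-1  *  (a n  *  x + b n) ^+ 4.
Proof. by rewrite /fpoly !hornerE. Qed.

Lemma e1 (R : realFieldType) (a b : nat -> R) n x :
  (fpoly a b n)^`().[x] =
  let A := a n.+1  *  a n + b n.+1 in let B := a n.+1  *  b n in
  let c := a n.-1 in let d := b n.-1 in let p := a n in let q := b n in
  A * (x-c) * x^+6 + (A * x+B) * x^+6 + 6 * (A * x+B) * (x-c) * x^+5 - 4 * d * p * (p * x+q)^+3.
Proof. rewrite /fpoly !derivE !hornerE /=. ring. Qed.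

Lemma e2 (R : realFieldType) (a b : nat -> R) n x :
  (fpoly a b n)^`(2).[x] =
  let A := a n.+1 * a n + b n.+1 in let B := a n.+1 * b n in
  let c := a n.-1 in let d := b n.-1 in let p := a n in let q := b n in
  2 * A * x ^+ 6 + 12 * A * (x - c) * x ^+ 5 + 12 * (A * x + B) * x ^+ 5
  + 30 * (A * x + B) * (x - c) * x ^+ 4 - 12 * d * p ^+ 2 * (p * x + q) ^+ 2.
Proof. rewrite /fpoly /= !derivE !hornerE /=. ring. Qed.

Lemma taylor_id (R : realFieldType) (A B c d p q l h : R) :
  let F x := (A * x + B) * (x - c) * x ^+ 6 - d * (p * x + q) ^+ 4 in
  let F1 x := A * (x - c) * x ^+ 6 + (A * x + B) * x ^+ 6 + 6 * (A * x + B) * (x - c) * x ^+ 5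
     - 4 * d * p * (p * x + q) ^+ 3 in
  let F2 x := 2 * A * x ^+ 6 + 12 * A * (x - c) * x ^+ 5 + 12 * (A * x + B) * x ^+ 5
  + 30 * (A * x + B) * (x - c) * x ^+ 4 - 12 * d * p ^+ 2 * (p * x + q) ^+ 2 in
  let al := A * l + B in let be := l - c in
  2 * F (l + h) =
  2 * F l + 2 * F1 l * h + F2 l * h ^+ 2
  + 2 * (h ^+ 3 * (20 * al * be * l ^+ 3 + 15 * (al + A * be) * l ^+ 4 + 6 * A * l ^+ 5
              - 4 * d * p ^+ 3 * (p * l + q))
  + h ^+ 4 * (15 * al * be * l ^+ 2 + 20 * (al + A * be) * l ^+ 3 + 15 * A * l ^+ 4
              - d * p ^+ 4)
  + h ^+ 5 * (6 * al * be * l + 15 * (al + A * be) * l ^+ 2 + 20 * A * l ^+ 3)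
  + h ^+ 6 * (al * be + 6 * (al + A * be) * l + 15 * A * l ^+ 2)
  + h ^+ 7 * ((al + A * be) + 6 * A * l)
  + h ^+ 8 * A).
Proof. rewrite /=. ring. Qed.

Lemma sum_pos (R : realFieldType) (x0 x1 x2 y : R) :
  0 < x0 -> 0 <= x1 -> 0 <= x2 -> 0 <= y -> 0 < x0 + x1 + x2 + 2 * y.
Proof. lra. Qed.
Lemma sum6 (R : realFieldType) (y3 y4 y5 y6 y7 y8 : R) :
  0 <= y3 -> 0 <= y4 -> 0 <= y5 -> 0 <= y6 -> 0 <= y7 -> 0 <= y8 ->
  0 <= y3 + y4 + y5 + y6 + y7 + y8.
Proof. lra. Qed.

Lemma fpos (R : realFieldType) (a b : nat -> R) n l t :
  0 < a n -> a n <= a n.+1 -> a n.-1 <= a n -> 0 < b n.-1 -> b n.-1 <= b n ->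
  b n <= b n.+1 -> 0 <= 21 * a n ^+ 2 + 11 * a n.+1 * a n - 4 * b n.-1 ->
  a n <= l -> l <= t ->
  0 < (fpoly a b n)^`(2).[l] -> 0 < (fpoly a b n)^`().[l] -> 0 < (fpoly a b n).[l] ->
  0 < (fpoly a b n).[t].
Proof.
move=> p0 pa1 cp d0 dq qb1 hc pl lt f2 f1 f0.
set h := t - l.
have h0 : 0 <= h by rewrite /h; lra.
have -> : t = l + h by rewrite /h; ring.
have T := @taylor_id R (a n.+1 * a n + b n.+1) (a n.+1 * b n) (a n.-1) (b n.-1) (a n) (b n) l h.
simpl in T.
have E0 := @e0 R a b n (l + h). have E0' := @e0 R a b n l.
have E1 := @e1 R a b n l. have E2 := @e2 R a b n l. simpl in E1, E2.
rewrite -E0 -E0' -E1 -E2 in T.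
have hd : 4 * b n.-1 <= 21 * a n ^+ 2 + 11 * a n.+1 * a n by lra.
have [C3 C4 C5 C6 [C7 C8]] := @coefs R (a n.+1) (b n.+1) (a n.-1) (b n.-1) (a n) (b n) l p0 pa1 cp d0 dq qb1 hd pl.
simpl in C3, C4, C5, C6, C7, C8.
have : 0 < 2 * (fpoly a b n).[l + h].
  rewrite T; apply: sum_pos.
  - by rewrite pmulr_rgt0.
  - by apply: mulr_ge0 => //; rewrite pmulr_rge0 // ltW.
  - by apply: mulr_ge0 => //; [exact: ltW | exact: exprn_ge0].
  - apply: sum6; apply: mulr_ge0 => //; exact: exprn_ge0.
lra.
Qed.

Theorem theorem2p1 (R : realFieldType) (z a b lambda : nat -> R) (N : nat) :
  (forall n, 0 < z n) ->
  (forall n, (1 <= n)%N -> z n.+1 = a n * z n + b n * z n.-1) ->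
  (forall n, (1 <= n)%N -> 0 < b n /\ b n <= b n.+1) ->
  (forall n, (1 <= n)%N -> 0 < a n /\ a n <= a n.+1) ->
  (forall n, (1 <= n)%N -> 0 <= 21 * a n ^+ 2 + 11 * a n.+1 * a n - 4 * b n.-1) ->
  (0 < N)%N ->
  (forall n, (N < n)%N ->
     [/\ z n / z n.-1 >= lambda n, lambda n >= a n,
         (fpoly a b n)^`(2).[lambda n] > 0,
         (fpoly a b n)^`().[lambda n] > 0 &
         (fpoly a b n).[lambda n] > 0]) ->
  ratio_log_convex_from N (ratio_seq z).
Proof.
move=> Hz Hrec Hb Ha Hc HN Hl.
rewrite /ratio_log_convex_from /log_convex_from => m Nm.
case: m Nm => [//|k] Nk.
have Nk2 : (N < k.+2)%N by apply: ltn_trans Nk _.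
have k1 : (1 <= k)%N by apply: leq_trans HN _.
have [Hzl Hla Hf2 Hf1 Hf0] := Hl k.+2 Nk2.
have [a1p a12] := Ha k.+1 isT.
have [a2p a23] := Ha k.+2 isT.
have [b1p b12] := Hb k.+1 isT.
have [b2p b23] := Hb k.+2 isT.
have Hc2 := Hc k.+2 isT.
have F := @fpos R a b k.+2 (lambda k.+2) (z k.+2 / z k.+1) a2p a23 a12 b1p b12 b23 Hc2 Hla Hzl Hf2 Hf1 Hf0.
rewrite (@e0 R a b k.+2) /= in F.
have Z2 := Hrec k.+1 isT. have Z3 := Hrec k.+2 isT. have Z4 := Hrec k.+3 isT.
simpl in Z2, Z3, Z4.
rewrite /ratio_seq /=.
have u0 := Hz k. have v0 := Hz k.+1. have w0 := Hz k.+2. have z30 := Hz k.+3.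
move: F Z2 Z3 Z4 u0 v0 w0 z30.
set u := z k; set v := z k.+1; set w := z k.+2; set z3 := z k.+3; set z4 := z k.+4.
move=> F Z2 Z3 Z4 u0 v0 w0 z30.
set A := a k.+3 * a k.+2 + b k.+3.
set B := a k.+3 * b k.+2.
set FF := (A * (w / v) + B) * (w / v - a k.+1) * (w / v) ^+ 6 -
       b k.+1 * (a k.+2 * (w / v) + b k.+2) ^+ 4 in F.
have N1 : w / v / (v / u) * (z4 / z3 / (z3 / w)) - (z3 / w / (w / v)) ^+ 2
   = (u * w ^+ 6 * z4 - v ^+ 4 * z3 ^+ 4) / (v ^+ 2 * z3 ^+ 2 * w ^+ 4).
  by field; rewrite ?gt_eqF.
have du : b k.+1 * u = w - a k.+1 * v by rewrite Z2; ring.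
have N2 : b k.+1 * (u * w ^+ 6 * z4 - v ^+ 4 * z3 ^+ 4) = v ^+ 8 * FF.
  have -> : b k.+1 * (u * w ^+ 6 * z4 - v ^+ 4 * z3 ^+ 4) =
     (b k.+1 * u) * w ^+ 6 * z4 - b k.+1 * v ^+ 4 * z3 ^+ 4 by ring.
  rewrite du Z4 Z3 /FF /A /B. field. by rewrite gt_eqF.
have Npos : 0 < u * w ^+ 6 * z4 - v ^+ 4 * z3 ^+ 4.
  have : 0 < b k.+1 * (u * w ^+ 6 * z4 - v ^+ 4 * z3 ^+ 4).
    by rewrite N2; apply: mulr_gt0 => //; apply: exprn_gt0.
  by rewrite pmulr_rgt0.
rewrite -subr_ge0 N1; apply: divr_ge0; first exact: ltW.
by apply: mulr_ge0; [apply: mulr_ge0|]; apply: exprn_ge0; apply: ltW.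
Qed.
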